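(* The price of anarchy (supremum over all weights $w_1,w_2\ge0$ with $w_1+w_2>0$ and all instances, with respect to subgame-perfect equilibria) for sequential two-player weighted congestion games with affine costs and proportional cost functions is equal to $1.5$; for fixed weights, the price of anarchy equals $1.5$ if and only if $w_1=w_2$.
   Context: A weighted two-player congestion game with affine costs consists of a finite set $R$ of resources, coefficients $\alpha_r,\beta_r \geq 0$ for each $r\in R$, two players $i=1,2$ with weights $w_i\ge 0$, and for each player $i$ a nonempty finite set $\mathcal{A}_i \subseteq 2^R$ of actions. For an action profile $A=(A_1,A_2)$ the load of $r$ is $x_r(A)=\sum_{j:\, r\in A_j} w_j$. With proportional costs, player $i$ pays $C_i(A)=w_i\sum_{r\in A_i}(\alpha_r+\beta_r x_r(A))$. The social cost is $C(A)=C_1(A)+C_2(A)$. In the sequential game, player 1 chooses $A_1$ first, then player 2, knowing $A_1$, chooses $A_2$. A subgame-perfect equilibrium consists of a function $A_1\mapsto A_2^*(A_1)$ with $C_2(A_1,A_2^*(A_1))\le C_2(A_1,A_2)$ for all $A_1,A_2$, and an action $A_1^*$ with $C_1(A_1^*,A_2^*(A_1^* ))\le C_1(A_1,A_2^*(A_1))$ for all $A_1$; its outcome is $(A_1^*,A_2^*(A_1^* ))$. The price of anarchy of an instance is the maximum over subgame-perfect equilibrium outcomes $A$ of $C(A)/\min_{A'}C(A')$; the price of anarchy of a class (for fixed or arbitrary weights) is the supremum over all instances (with positive optimal social cost). *)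

(* Defs.v *)
From HB Require Import structures.
From mathcomp Require Import all_boot all_order all_algebra.
From mathcomp Require Import reals.
Set Implicit Arguments. Unset Strict Implicit. Unset Printing Implicit Defensive.
Import Order.TTheory GRing.Theory Num.Theory.
Local Open Scope ring_scope.

(* A weighted two-player congestion game instance with affine costs
   (weights are given separately). *)
Record game (R : realType) := Game {
  res : finType;
  alpha : res -> R;
  beta : res -> R;
  acts1 : {set {set res}};
  acts2 : {set {set res}};
  alpha_ge0 : forall r, 0 <= alpha r;
  beta_ge0 : forall r, 0 <= beta r;
  acts1_nonempty : acts1 != set0;
  acts2_nonempty : acts2 != set0 }.

Section Costs.
Variables (R : realType) (G : game R) (w1 w2 : R).

Definition load (S1 S2 : {set res G}) (r : res G) : R :=
  (if r \in S1 then w1 else 0) + (if r \in S2 then w2 else 0).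

Definition cost1 (S1 S2 : {set res G}) : R :=
  w1 * \sum_(r in S1) (alpha r + beta r * load S1 S2 r).
Definition cost2 (S1 S2 : {set res G}) : R :=
  w2 * \sum_(r in S2) (alpha r + beta r * load S1 S2 r).
Definition social (S1 S2 : {set res G}) : R := cost1 S1 S2 + cost2 S1 S2.

Definition spe_outcome (S1 S2 : {set res G}) : Prop :=
  exists f : {set res G} -> {set res G},
    (forall X, X \in acts1 G ->
       f X \in acts2 G /\
       forall Y, Y \in acts2 G -> cost2 X (f X) <= cost2 X Y) /\
    S1 \in acts1 G /\ S2 = f S1 /\
    (forall X, X \in acts1 G -> cost1 S1 (f S1) <= cost1 X (f X)).

Definition social_opt (O1 O2 : {set res G}) : Prop :=
  O1 \in acts1 G /\ O2 \in acts2 G /\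
  forall X Y, X \in acts1 G -> Y \in acts2 G -> social O1 O2 <= social X Y.
End Costs.

Arguments load {R} G w1 w2 S1 S2 r.
Arguments cost1 {R} G w1 w2 S1 S2.
Arguments cost2 {R} G w1 w2 S1 S2.
Arguments social {R} G w1 w2 S1 S2.
Arguments spe_outcome {R} G w1 w2 S1 S2.
Arguments social_opt {R} G w1 w2 O1 O2.

Definition poa_ratios (R : realType) (w1 w2 : R) : R -> Prop :=
  fun q => exists (G : game R) (S1 S2 O1 O2 : {set res G}),
    spe_outcome G w1 w2 S1 S2 /\ social_opt G w1 w2 O1 O2 /\
    0 < social G w1 w2 O1 O2 /\
    q = social G w1 w2 S1 S2 / social G w1 w2 O1 O2.

Definition poa_ratios_all (R : realType) : R -> Prop :=
  fun q => exists w1 w2 : R, 0 <= w1 /\ 0 <= w2 /\ 0 < w1 + w2 /\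
    poa_ratios w1 w2 q.

Definition is_supremum (R : realType) (S : R -> Prop) (x : R) : Prop :=
  (forall y, S y -> y <= x) /\
  (forall b, (forall y, S y -> y <= b) -> x <= b).

(* Main.v *)
Require Import Defs.
From HB Require Import structures.
From mathcomp Require Import all_boot all_order all_algebra.
From mathcomp Require Import reals.
From mathcomp Require Import ring lra.
Import Order.TTheory GRing.Theory Num.Theory.
Local Open Scope ring_scope.

Section K.
Variables (R : realType) (G : game R) (w1 w2 : R).
Hypotheses (h1 : 0 <= w1) (h2 : 0 <= w2).

Lemma cost1E X Y : cost1 G w1 w2 X Y =
  \sum_r (if r \in X then w1 * (alpha r + beta r * load G w1 w2 X Y r) else 0).
Proof. by rewrite /cost1 big_mkcond mulr_sumr; apply: eq_bigr => r _; case: ifP; rewrite ?mulr0. Qed.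
Lemma cost2E X Y : cost2 G w1 w2 X Y =
  \sum_r (if r \in Y then w2 * (alpha r + beta r * load G w1 w2 X Y r) else 0).
Proof. by rewrite /cost2 big_mkcond mulr_sumr; apply: eq_bigr => r _; case: ifP; rewrite ?mulr0. Qed.

Lemma key S1 S2 O1 O2 B :
  0 <= (w1*w2) * cost1 G w1 w2 S1 S2 - (w1^+2 + w2^+2) * cost2 G w1 w2 S1 B
   + (w1^+2 + w2^+2 + w1*w2) * (cost1 G w1 w2 O1 O2 - cost1 G w1 w2 O1 B + cost2 G w1 w2 O1 B).
Proof.
rewrite !cost1E !cost2E !mulr_sumr -!sumrB -!big_split /=.
rewrite mulr_sumr -big_split /=; apply: sumr_ge0 => r _.
have ha := alpha_ge0 r; have hb := beta_ge0 r.
have m : forall i j, 0 <= w1^+i * w2^+j by move=> i j; apply: mulr_ge0; apply: exprn_ge0.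
have a30 := mulr_ge0 ha (m 3 0)%N; have a21 := mulr_ge0 ha (m 2 1)%N.
have a12 := mulr_ge0 ha (m 1 2)%N; have a03 := mulr_ge0 ha (m 0 3)%N.
have b40 := mulr_ge0 hb (m 4 0)%N; have b31 := mulr_ge0 hb (m 3 1)%N.
have b22 := mulr_ge0 hb (m 2 2)%N; have b13 := mulr_ge0 hb (m 1 3)%N.
have b04 := mulr_ge0 hb (m 0 4)%N.
rewrite /load.
case: (r \in S1); case: (r \in S2); case: (r \in O1); case: (r \in O2); case: (r \in B) => /=; lra.
Qed.
End K.
Section Inst.
Variables (R : realType) (w : R).
Hypothesis hw : 0 < w.

Definition ix : 'I_3 := @Ordinal 3 0 isT.
Definition iu : 'I_3 := @Ordinal 3 1 isT.
Definition iz : 'I_3 := @Ordinal 3 2 isT.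
Definition ial (i : 'I_3) : R := if val i == 0%N then w else if val i == 1%N then 2 * w else 0.
Definition ibe (i : 'I_3) : R := if val i == 2%N then 1 else 0.
Definition iA1 : {set {set 'I_3}} := [set [set ix]; [set iz]].
Definition iA2 : {set {set 'I_3}} := [set [set iu]; [set iz]].

Lemma ial_ge0 r : 0 <= ial r.
Proof. have hw0 := hw; rewrite /ial; case: ifP => _; first lra; case: ifP => _; lra. Qed.
Lemma ibe_ge0 r : 0 <= ibe r.
Proof. rewrite /ibe; case: ifP => _; lra. Qed.
Lemma iA1_n0 : iA1 != set0.
Proof. by apply/set0Pn; exists [set ix]; rewrite !inE eqxx. Qed.
Lemma iA2_n0 : iA2 != set0.
Proof. by apply/set0Pn; exists [set iu]; rewrite !inE eqxx. Qed.

Definition iG := @Game R 'I_3 ial ibe iA1 iA2 ial_ge0 ibe_ge0 iA1_n0 iA2_n0.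

Lemma c1x Y : cost1 iG w w [set ix] Y = w * w.
Proof. by rewrite /cost1 big_set1 /load /= /ial /ibe /=; lra. Qed.
Lemma c1zz : cost1 iG w w [set iz] [set iz] = 2 * (w * w).
Proof. by rewrite /cost1 big_set1 /load !inE eqxx /= /ial /ibe /=; lra. Qed.
Lemma c1zu : cost1 iG w w [set iz] [set iu] = w * w.
Proof. by rewrite /cost1 big_set1 /load !inE eqxx /= /ial /ibe /=; lra. Qed.
Lemma c2u X : cost2 iG w w X [set iu] = 2 * (w * w).
Proof. rewrite /cost2 big_set1 /load /= /ial /ibe /=; case: ifP => _; lra. Qed.
Lemma c2xz : cost2 iG w w [set ix] [set iz] = w * w.
Proof. by rewrite /cost2 big_set1 /load !inE eqxx /= /ial /ibe /=; lra. Qed.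
Lemma c2zz : cost2 iG w w [set iz] [set iz] = 2 * (w * w).
Proof. by rewrite /cost2 big_set1 /load !inE eqxx /= /ial /ibe /=; lra. Qed.

Lemma xz_neq : ([set iz] == [set ix]) = false.
Proof. apply/negbTE/negP => /eqP/setP/(_ iz); by rewrite !inE eqxx. Qed.

Lemma inA1 X : X \in acts1 iG -> X = [set ix] \/ X = [set iz].
Proof. by rewrite /= !inE => /orP [/eqP -> | /eqP ->]; [left|right]. Qed.
Lemma inA2 X : X \in acts2 iG -> X = [set iu] \/ X = [set iz].
Proof. by rewrite /= !inE => /orP [/eqP -> | /eqP ->]; [left|right]. Qed.

Lemma inst_spe : spe_outcome iG w w [set iz] [set iu].
Proof.
exists (fun X => if X == [set ix] then [set iz] else [set iu]).
have hw0 := hw; have w2 : 0 < w * w by apply: mulr_gt0.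
split; [|split; [|split]].
- move=> X /inA1 [->|->]; rewrite ?eqxx ?xz_neq; split; rewrite /= ?inE ?eqxx ?orbT //;
   move=> Y /inA2 [->|->]; rewrite ?c2u ?c2xz ?c2zz; lra.
- by rewrite /= !inE eqxx orbT.
- by rewrite xz_neq.
- move=> X /inA1 [->|->]; rewrite ?eqxx ?xz_neq ?c1x ?c1zu; lra.
Qed.

Lemma inst_opt : social_opt iG w w [set ix] [set iz].
Proof.
have hw0 := hw; have w2 : 0 < w * w by apply: mulr_gt0.
split; [by rewrite /= !inE eqxx | split; [by rewrite /= !inE eqxx orbT|]].
move=> X Y /inA1 [->|->] /inA2 [->|->]; rewrite /social ?c1x ?c1zz ?c1zu ?c2u ?c2xz ?c2zz; lra.
Qed.

Lemma inst_ratio : poa_ratios w w (3/2).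
Proof.
have hw0 := hw; have w2 : 0 < w * w by apply: mulr_gt0.
exists iG, [set iz], [set iu], [set ix], [set iz]; split; first exact: inst_spe.
split; first exact: inst_opt.
rewrite /social c1x c1zu c2u c2xz; split; first lra.
field; lra.
Qed.
End Inst.

Lemma upper (R : realType) (G : game R) (w1 w2 : R) S1 S2 O1 O2 :
  0 <= w1 -> 0 <= w2 ->
  spe_outcome G w1 w2 S1 S2 -> social_opt G w1 w2 O1 O2 ->
  (w1^+2 + w2^+2) * social G w1 w2 S1 S2 <=
  (w1^+2 + w2^+2 + w1*w2) * social G w1 w2 O1 O2.
Proof.
move=> h1 h2 [f [Hf [HS1 [-> H1]]]] [HO1 [HO2 _]].
have [HB HBr] := Hf O1 HO1.
have [_ HAr] := Hf S1 HS1.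
have i1 := HAr (f O1) HB.
have i2 := H1 O1 HO1.
have i3 := HBr O2 HO2.
have K := @key R G w1 w2 h1 h2 S1 (f S1) O1 O2 (f O1).
have hk : 0 <= w1 * w2 by apply: mulr_ge0.
have hD : 0 <= w1^+2 + w2^+2 by apply: addr_ge0; apply: exprn_ge0.
have hDk : 0 <= w1^+2 + w2^+2 + w1*w2 by apply: addr_ge0.
have p1 := ler_wpM2l hD i1.
have p2 := ler_wpM2l hDk i2.
have p3 := ler_wpM2l hDk i3.
rewrite /social.
lra.
Qed.

Arguments upper {R G w1 w2 S1 S2 O1 O2}.

Lemma D_gt0 (R : realType) (w1 w2 : R) : 0 <= w1 -> 0 <= w2 -> 0 < w1 + w2 ->
  0 < w1^+2 + w2^+2.
Proof.
move=> h1 h2 h.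
have := mulr_gt0 h h; have := sqr_ge0 (w1 - w2); nra.
Qed.

Arguments D_gt0 {R w1 w2}.

Lemma ratio_le (R : realType) (w1 w2 q : R) : 0 <= w1 -> 0 <= w2 -> 0 < w1 + w2 ->
  poa_ratios w1 w2 q -> q * (w1^+2 + w2^+2) <= w1^+2 + w2^+2 + w1*w2.
Proof.
move=> h1 h2 h [G [S1 [S2 [O1 [O2 [spe [opt [pos ->]]]]]]]].
have U := upper h1 h2 spe opt.
rewrite mulrAC ler_pdivrMr //.
lra.
Qed.

Arguments ratio_le {R w1 w2 q}.

Lemma ratio_le32 (R : realType) (w1 w2 q : R) : 0 <= w1 -> 0 <= w2 -> 0 < w1 + w2 ->
  poa_ratios w1 w2 q -> q <= 3/2.
Proof.
move=> h1 h2 h hq.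
have L := ratio_le h1 h2 h hq.
have D := D_gt0 h1 h2 h.
have S := sqr_ge0 (w1 - w2).
nra.
Qed.

Arguments ratio_le32 {R w1 w2 q}.
Arguments inst_ratio {R w}.

Theorem corollary6 (R : realType) :
  is_supremum (@poa_ratios_all R) (3 / 2) /\
  (forall w1 w2 : R, 0 <= w1 -> 0 <= w2 -> 0 < w1 + w2 ->
     (is_supremum (poa_ratios w1 w2) (3 / 2) <-> w1 = w2)).
Proof.
split.
  split.
    by move=> y [w1 [w2 [h1 [h2 [h hy]]]]]; apply: ratio_le32 hy.
  move=> b hb; apply: hb; exists 1, 1; split; first lra; split; first lra; split; first lra.
  by apply: inst_ratio; lra.
move=> w1 w2 h1 h2 h; split.
  move=> [ub least].
  have D := D_gt0 h1 h2 h.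
  have hr : (forall y, poa_ratios w1 w2 y -> y <= (w1^+2 + w2^+2 + w1*w2) / (w1^+2 + w2^+2)).
    by move=> y hy; rewrite ler_pdivlMr //; apply: ratio_le hy.
  have := least _ hr; rewrite ler_pdivlMr // => H.
  have S := sqr_ge0 (w1 - w2).
  have E : (w1 - w2)^+2 = 0 by apply/eqP; rewrite eq_le S andbT; nra.
  by move/eqP: E; rewrite sqrf_eq0 subr_eq0 => /eqP.
move=> E; subst w2.
have hw : 0 < w1 by lra.
split; first by move=> y hy; apply: ratio_le32 hy.
by move=> b hb; apply: hb; apply: inst_ratio.
Qed.
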